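(* Fix a center $c$ and bandwidth $r>0$, and let $(p^*,q^* )\in(0,1)^2$ maximize $\ell(p,q,K_{c,r})$ over $[0,1]^2$ with finite value. Then, treating $p=p^*,q=q^*,c$ as fixed and differentiating only through the bandwidth, \[ \Big|\frac{\partial}{\partial r}\ell(p^*,q^*,K_{c,r})\Big|\le\frac{4}{e\,r}. \]
   Context: $B\subset\mathbb{R}^d$ finite nonempty, $m:B\to\{0,1\}$, $M=\{x\in B:m(x)=1\}$. $K_{c,r}(x)=\exp(-\|x-c\|^2/r^2)$. For $p,q\in[0,1]$ and $K:B\to[0,1]$: $g(x)=pK(x)+q(1-K(x))$, $\ell(p,q,K)=\frac{1}{|B|}\big(\sum_{x\in M}\log g(x)+\sum_{x\in B\setminus M}\log(1-g(x))\big)$. *)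

(* Defs.v *)
From Stdlib Require Import Reals List.
Import ListNotations.
Open Scope R_scope.

(* Points of R^d are represented as lists of reals of length d. *)
Definition point := list R.

Definition sqdist (x c : point) : R :=
  fold_right Rplus 0 (map (fun ab => (fst ab - snd ab)^2) (combine x c)).

Definition Kgauss (c : point) (r : R) (x : point) : R :=
  exp (- sqdist x c / r^2).

Definition gmix (p q : R) (K : point -> R) (x : point) : R :=
  p * K x + q * (1 - K x).

(* sum over the finite set B (a duplicate-free list) *)
Definition sumB (B : list point) (f : point -> R) : R :=
  fold_right Rplus 0 (map f B).

(* l(p,q,K) = 1/|B| ( sum_{x in M} log g(x) + sum_{x in B\M} log(1 - g(x)) ),
   with M = {x in B | m x = true}.  Stdlib's ln is total, so this is the
   correct value exactly when [ell_finite] holds. *)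
Definition ell (B : list point) (m : point -> bool) (p q : R) (K : point -> R) : R :=
  / INR (length B) *
  sumB B (fun x => if m x then ln (gmix p q K x) else ln (1 - gmix p q K x)).

Definition ell_finite (B : list point) (m : point -> bool) (p q : R) (K : point -> R) : Prop :=
  forall x, In x B -> if m x then 0 < gmix p q K x else 0 < 1 - gmix p q K x.

(* Main.v *)
Require Import Defs.
From Stdlib Require Import Reals List Lra.
Open Scope R_scope.

Lemma dlim_eq f x l l' : derivable_pt_lim f x l -> l = l' -> derivable_pt_lim f x l'.
Proof. intros H ->; exact H. Qed.

Lemma dlim_ext f g x l : (forall s, f s = g s) -> derivable_pt_lim f x l -> derivable_pt_lim g x l.
Proof.
  intros H D eps He; destruct (D eps He) as [del Hd]; exists del; intros h Hh Hh2.
  rewrite <- !H; auto.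
Qed.

Lemma daff a b f x l : derivable_pt_lim f x l ->
  derivable_pt_lim (fun s => a + b * f s) x (b * l).
Proof.
  intros H. eapply dlim_eq.
  exact (derivable_pt_lim_plus (fct_cte a) (mult_real_fct b f) x 0 (b*l)
           (derivable_pt_lim_const a x) (derivable_pt_lim_scal f b x l H)).
  ring.
Qed.

Lemma dlin a b x : derivable_pt_lim (fun s => a + b * s) x b.
Proof.
  eapply dlim_eq. exact (daff a b id x 1 (derivable_pt_lim_id x)). ring.
Qed.

Lemma dln f x l : derivable_pt_lim f x l -> 0 < f x ->
  derivable_pt_lim (fun s => ln (f s)) x (l / f x).
Proof.
  intros H Hp. eapply dlim_eq.
  exact (derivable_pt_lim_comp f ln x l (/ f x) H (derivable_pt_lim_ln _ Hp)).
  unfold Rdiv; ring.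
Qed.

Lemma dK sq r : 0 < r ->
  derivable_pt_lim (fun s => exp (- sq / s^2)) r (exp (- sq / r^2) * (2 * sq / r^3)).
Proof.
  intros Hr.
  assert (H1 : derivable_pt_lim (fun s => - sq / s^2) r (2 * sq / r^3)).
  { eapply dlim_eq.
    exact (derivable_pt_lim_div (fct_cte (- sq)) (fun y => y ^ 2) r 0 _
             (derivable_pt_lim_const _ r) (derivable_pt_lim_pow r 2)
             ltac:(apply pow_nonzero; lra)).
    unfold fct_cte, Rsqr; simpl. field. lra. }
  eapply dlim_eq.
  exact (derivable_pt_lim_comp _ exp r _ _ H1 (derivable_pt_lim_exp _)).
  reflexivity.
Qed.

Lemma sumB_deriv (B : list point) (F : point -> R -> R) (F' : point -> R) t :
  (forall x, In x B -> derivable_pt_lim (F x) t (F' x)) ->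
  derivable_pt_lim (fun s => sumB B (fun x => F x s)) t (sumB B F').
Proof.
  induction B as [|a B IH]; intros H; unfold sumB; simpl.
  - exact (derivable_pt_lim_const 0 t).
  - exact (derivable_pt_lim_plus (F a) (fun s => sumB B (fun x => F x s)) t _ _
             (H a (or_introl eq_refl)) (IH (fun x Hx => H x (or_intror Hx)))).
Qed.

Lemma sumB_ext B f g : (forall x, In x B -> f x = g x) -> sumB B f = sumB B g.
Proof.
  induction B as [|a B IH]; intros H; unfold sumB in *; simpl; [reflexivity|].
  rewrite (H a (or_introl eq_refl)), IH; [reflexivity|]. intros; apply H; right; auto.
Qed.

Lemma sumB_le B f g : (forall x, In x B -> f x <= g x) -> sumB B f <= sumB B g.
Proof.
  induction B as [|a B IH]; intros H; unfold sumB in *; simpl; [lra|].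
  apply Rplus_le_compat; [apply H; left; reflexivity| apply IH; intros; apply H; right; auto].
Qed.

Lemma sumB_plus B f g : sumB B (fun x => f x + g x) = sumB B f + sumB B g.
Proof. induction B as [|a B IH]; unfold sumB in *; simpl; [ring|]. rewrite IH; ring. Qed.

Lemma sumB_scal B a f : sumB B (fun x => a * f x) = a * sumB B f.
Proof. induction B as [|a' B IH]; unfold sumB in *; simpl; [ring|]. rewrite IH; ring. Qed.

Lemma sumB_minus B f g : sumB B (fun x => f x - g x) = sumB B f - sumB B g.
Proof. induction B as [|a B IH]; unfold sumB in *; simpl; [ring|]. rewrite IH; ring. Qed.

Lemma sumB_const B a : sumB B (fun _ => a) = INR (length B) * a.
Proof.
  induction B as [|a' B IH]; [unfold sumB; simpl; ring|].
  change (a + sumB B (fun _ => a) = INR (S (length B)) * a). rewrite IH, S_INR. ring.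
Qed.

Lemma sumB_abs B f : Rabs (sumB B f) <= sumB B (fun x => Rabs (f x)).
Proof.
  induction B as [|a B IH]; unfold sumB in *; simpl.
  - rewrite Rabs_R0; lra.
  - eapply Rle_trans. apply Rabs_triang. lra.
Qed.

Lemma sqdist_nonneg x c : 0 <= sqdist x c.
Proof.
  unfold sqdist. generalize (combine x c) as l. induction l as [|a l IH]; cbn [fold_right map]; [lra|].
  pose proof (pow2_ge_0 (fst a - snd a)) as Hp. simpl in Hp, IH |- *. lra.
Qed.

Lemma max_left_deriv (phi : R -> R) l : derivable_pt_lim phi 1 l ->
  (forall t, 0 < t < 1 -> phi t <= phi 1) -> 0 <= l.
Proof.
  intros D Hm. destruct (Rle_or_lt 0 l) as [|Hl]; auto. exfalso.
  destruct (D (- l) ltac:(lra)) as [del Hd].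
  pose (h := - Rmin (del/2) (1/2)).
  assert (Hmin1 : Rmin (del/2) (1/2) <= del/2) by apply Rmin_l.
  assert (Hmin2 : Rmin (del/2) (1/2) <= 1/2) by apply Rmin_r.
  assert (Hpos : 0 < Rmin (del/2) (1/2)).
  { apply Rmin_pos; [pose proof (cond_pos del); lra | lra]. }
  assert (Hh0 : h <> 0) by (unfold h; lra).
  assert (Hhd : Rabs h < del).
  { unfold h. rewrite Rabs_Ropp, Rabs_pos_eq by lra. pose proof (cond_pos del); lra. }
  specialize (Hd h Hh0 Hhd).
  assert (Hle : phi (1 + h) <= phi 1) by (apply Hm; unfold h; lra).
  assert (Hq : 0 <= (phi (1 + h) - phi 1) / h).
  { unfold Rdiv. assert (/ h < 0) by (apply Rinv_lt_0_compat; unfold h; lra). nra. }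
  rewrite Rabs_pos_eq in Hd by lra. lra.
Qed.

Lemma Rdiv_le_0_compat a b : 0 <= a -> 0 < b -> 0 <= a / b.
Proof. intros. unfold Rdiv. apply Rmult_le_pos; auto. left; apply Rinv_0_lt_compat; auto. Qed.

Lemma tet a : 0 <= a -> a * exp (- a) <= / exp 1.
Proof.
  intros Ha. pose proof (exp_ineq1_le (a - 1)).
  assert (E : exp (a - 1) * exp (- a) = / exp 1).
  { rewrite <- exp_plus, <- exp_Ropp. f_equal; ring. }
  pose proof (exp_pos (-a)). nra.
Qed.

Theorem lemmaA6 (d : nat) (B : list point) (m : point -> bool) (c : point) (r ps qs : R) :
  B <> nil -> NoDup B -> (forall x, In x B -> length x = d) -> length c = d ->
  0 < r ->
  0 < ps < 1 -> 0 < qs < 1 ->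
  ell_finite B m ps qs (Kgauss c r) ->
  (forall p q, 0 <= p <= 1 -> 0 <= q <= 1 -> ell_finite B m p q (Kgauss c r) ->
     ell B m p q (Kgauss c r) <= ell B m ps qs (Kgauss c r)) ->
  exists D, derivable_pt_lim (fun s => ell B m ps qs (Kgauss c s)) r D /\
            Rabs D <= 4 / (exp 1 * r).
Proof.
  intros HB _ _ _ Hr Hp Hq _ Hmax.
  set (N := INR (length B)).
  assert (HN : 0 < N).
  { unfold N; destruct B; [congruence|]. simpl length. rewrite S_INR. pose proof (pos_INR (length B)). lra. }
  set (K := Kgauss c r).
  set (g := fun x => gmix ps qs K x).
  assert (HK : forall x, 0 < K x <= 1).
  { intros x. unfold K, Kgauss. split; [apply exp_pos|].
    pose proof (sqdist_nonneg x c).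
    assert (0 < r^2) by (apply pow_lt; lra).
    assert (Hz : - sqdist x c / r^2 <= 0).
    { unfold Rdiv. assert (0 < / r^2) by (apply Rinv_0_lt_compat; lra). nra. }
    destruct (Rle_lt_or_eq_dec _ _ Hz) as [Hlt|Heq].
    - rewrite <- exp_0. left. apply exp_increasing; auto.
    - rewrite Heq, exp_0; lra. }
  assert (Hg : forall x, 0 < g x < 1).
  { intros x. unfold g, gmix. destruct (HK x). split; nra. }
  set (F1 := fun x t => if m x then ln (0 + g x * t) else ln (1 + (- g x) * t)).
  set (A1 := fun x => if m x then 1 else - g x / (1 - g x)).
  assert (L1 : 0 <= / N * sumB B A1).
  { apply (max_left_deriv (fun t => / N * sumB B (fun x => F1 x t))).
    - apply (derivable_pt_lim_scal (fun t => sumB B (fun x => F1 x t))).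
      apply sumB_deriv. intros x _. unfold F1, A1. destruct (Hg x).
      destruct (m x).
      + eapply dlim_eq. apply dln. apply dlin. cbv beta; lra. cbv beta; field; lra.
      + eapply dlim_eq. apply dln. apply dlin. cbv beta; lra. cbv beta; field; lra.
    - intros t Ht.
      assert (E : forall t, / N * sumB B (fun x => F1 x t) = ell B m (t*ps) (t*qs) K).
      { intros t'. unfold ell. f_equal. apply sumB_ext. intros x _. unfold F1, g, gmix.
        destruct (m x); f_equal; ring. }
      rewrite !E. replace (1*ps) with ps by ring. replace (1*qs) with qs by ring.
      apply Hmax; try (split; nra).
      intros x _. assert (Eg : gmix (t*ps) (t*qs) K x = t * g x) by (unfold g, gmix; ring).
      fold K; rewrite Eg. destruct (Hg x). destruct (m x); nra. }
  set (F2 := fun x t => if m x then ln (1 + (- (1 - g x)) * t) else ln (0 + (1 - g x) * t)).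
  set (A2 := fun x => if m x then - (1 - g x) / g x else 1).
  assert (L2 : 0 <= / N * sumB B A2).
  { apply (max_left_deriv (fun t => / N * sumB B (fun x => F2 x t))).
    - apply (derivable_pt_lim_scal (fun t => sumB B (fun x => F2 x t))).
      apply sumB_deriv. intros x _. unfold F2, A2. destruct (Hg x).
      destruct (m x).
      + eapply dlim_eq. apply dln. apply dlin. cbv beta; lra. cbv beta; field; lra.
      + eapply dlim_eq. apply dln. apply dlin. cbv beta; lra. cbv beta; field; lra.
    - intros t Ht.
      assert (E : forall t, / N * sumB B (fun x => F2 x t) =
                            ell B m (1 - t*(1-ps)) (1 - t*(1-qs)) K).
      { intros t'. unfold ell. f_equal. apply sumB_ext. intros x _. unfold F2, g, gmix.
        destruct (m x); f_equal; ring. }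
      rewrite !E. replace (1 - 1*(1-ps)) with ps by ring. replace (1-1*(1-qs)) with qs by ring.
      apply Hmax; try (split; nra).
      intros x _. assert (Eg : gmix (1 - t*(1-ps)) (1 - t*(1-qs)) K x = 1 - t * (1 - g x))
        by (unfold g, gmix; ring).
      fold K; rewrite Eg. destruct (Hg x). destruct (m x); nra. }
  set (w := fun x => if m x then / g x else / (1 - g x)).
  assert (Hw : sumB B w <= 2 * N).
  { assert (S1 : 0 <= sumB B A1).
    { destruct (Rle_or_lt 0 (sumB B A1)); auto. pose proof (Rinv_0_lt_compat _ HN). nra. }
    assert (S2 : 0 <= sumB B A2).
    { destruct (Rle_or_lt 0 (sumB B A2)); auto. pose proof (Rinv_0_lt_compat _ HN). nra. }
    assert (E : sumB B (fun x => A1 x + A2 x) = sumB B (fun x => 2 - w x)).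
    { apply sumB_ext. intros x _. unfold A1, A2, w. destruct (Hg x).
      destruct (m x); field; lra. }
    rewrite sumB_plus, sumB_minus, sumB_const in E. fold N in E. lra. }
  set (Kp := fun x => exp (- sqdist x c / r^2) * (2 * sqdist x c / r^3)).
  set (T := fun x => if m x then (ps - qs) * Kp x / g x else (qs - ps) * Kp x / (1 - g x)).
  exists (/ N * sumB B T). split.
  - apply (derivable_pt_lim_scal
             (fun s => sumB B (fun x => if m x then ln (gmix ps qs (Kgauss c s) x)
                                        else ln (1 - gmix ps qs (Kgauss c s) x)))).
    apply (sumB_deriv B (fun x s => if m x then ln (gmix ps qs (Kgauss c s) x)
                                    else ln (1 - gmix ps qs (Kgauss c s) x))).
    intros x _. unfold T. destruct (Hg x). pose proof (dK (sqdist x c) r Hr) as DK.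
    destruct (m x).
    + eapply dlim_ext. intros s. instantiate (1 := fun s => ln (qs + (ps - qs) * Kgauss c s x)).
      simpl. f_equal. unfold gmix; ring.
      eapply dlim_eq. apply dln. apply daff. exact DK.
      unfold g, gmix, K in *. lra.
      unfold Kp, g, gmix, K, Kgauss. cbv beta. unfold Rdiv. f_equal. f_equal. ring.
    + eapply dlim_ext. intros s.
      instantiate (1 := fun s => ln ((1 - qs) + (qs - ps) * Kgauss c s x)).
      simpl. f_equal. unfold gmix; ring.
      eapply dlim_eq. apply dln. apply daff. exact DK.
      unfold g, gmix, K in *. lra.
      unfold Kp, g, gmix, K, Kgauss. cbv beta. unfold Rdiv. f_equal. f_equal. ring.
  - set (C := 2 / r * / exp 1).
    assert (HKp : forall x, Rabs (Kp x) <= C).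
    { intros x. unfold Kp, C. pose proof (sqdist_nonneg x c) as Hs.
      assert (Hr2 : 0 < r^2) by (apply pow_lt; lra).
      pose proof (tet (sqdist x c / r^2) ltac:(apply Rdiv_le_0_compat; lra)).
      assert (E : exp (- sqdist x c / r ^ 2) * (2 * sqdist x c / r ^ 3)
                  = 2 / r * (sqdist x c / r^2 * exp (- (sqdist x c / r^2)))).
      { replace (- (sqdist x c / r^2)) with (- sqdist x c / r^2) by (field; lra).
        field; lra. }
      rewrite E, Rabs_pos_eq.
      + apply Rmult_le_compat_l; auto. apply Rdiv_le_0_compat; lra.
      + apply Rmult_le_pos. apply Rdiv_le_0_compat; lra.
        apply Rmult_le_pos. apply Rdiv_le_0_compat; lra. left; apply exp_pos. }
    assert (HC : 0 <= C).
    { unfold C. apply Rmult_le_pos. apply Rdiv_le_0_compat; lra.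
      left; apply Rinv_0_lt_compat, exp_pos. }
    assert (HT : forall x, In x B -> Rabs (T x) <= C * w x).
    { intros x _. unfold T, w. destruct (Hg x). pose proof (HKp x).
      assert (Hpq : Rabs (ps - qs) <= 1) by (apply Rabs_le; lra).
      assert (Hqp : Rabs (qs - ps) <= 1) by (apply Rabs_le; lra).
      destruct (m x); unfold Rdiv; rewrite !Rabs_mult, (Rabs_pos_eq (/ _))
        by (left; apply Rinv_0_lt_compat; lra);
        apply Rmult_le_compat_r; try (left; apply Rinv_0_lt_compat; lra);
        pose proof (Rabs_pos (Kp x)); nra. }
    rewrite Rabs_mult, Rabs_pos_eq by (left; apply Rinv_0_lt_compat; lra).
    eapply Rle_trans. apply Rmult_le_compat_l. left; apply Rinv_0_lt_compat; lra.
    eapply Rle_trans. apply sumB_abs. apply sumB_le. exact HT.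
    rewrite sumB_scal.
    replace (4 / (exp 1 * r)) with (2 * C) by (unfold C; field; split; [lra| apply Rgt_not_eq, exp_pos]).
    apply (Rmult_le_reg_l N); auto.
    replace (N * (/ N * (C * sumB B w))) with (C * sumB B w) by (field; lra).
    nra.
Qed.
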